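(* Let $M$ be a finite set of alternatives, $\mathcal{R}$ the set of weak preference orders on $M$, and $\varphi:\mathcal{R}\to\Delta(M)$ a mechanism. If $\varphi$ is separation monotonic, separation upper invariant, and separation lower invariant, then it is separation strategyproof, i.e., for every separation $(R,R')$, $\varphi(R)$ first order-stochastically dominates $\varphi(R')$ at $R$, and $\varphi(R')$ first order-stochastically dominates $\varphi(R)$ at $R'$.
   Context: A preference order is a complete, transitive relation $R$ on $M$; $a\,I\,b$ means $a\,R\,b$ and $b\,R\,a$; $a\,P\,b$ means $a\,R\,b$ and not $b\,R\,a$. Write $R$ as $M_1\,P\,\cdots\,P\,M_K$ where $(M_k)$ are the nonempty indifference classes ordered so that $a\,P\,b$ for $a\in M_k$, $b\in M_{k'}$, $k<k'$. For $A\subseteq M$, $\varphi_A(R)=\sum_{a\in A}(\varphi(R))_a$. A lottery $x$ first order-stochastically dominates $y$ at $R$ if $\sum_{j: j R a}x_j\ge\sum_{j: j R a}y_j$ for all $a\in M$. A separation is a pair $(R,R')$ such that, with $R=M_1\,P\,\cdots\,P\,M_K$, there are $\kappa\in\{1,\dots,K\}$ and a partition of $M_\kappa$ into disjoint nonempty $M_\kappa^1,M_\kappa^2$ with $R'=M_1\,P'\,\cdots\,P'\,M_{\kappa-1}\,P'\,M_\kappa^1\,P'\,M_\kappa^2\,P'\,M_{\kappa+1}\,P'\,\cdots\,P'\,M_K$ (indifference within each listed set). Axioms, for every separation $(R,R')$: separation responsive: $\varphi_{M_\kappa^1}(R')\ge\varphi_{M_\kappa^1}(R)$ and $\varphi_{M_\kappa^2}(R')\le\varphi_{M_\kappa^2}(R)$;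 separation direct: if $\varphi_{M_k}(R)\ne\varphi_{M_k}(R')$ for some $k\in\{1,\dots,K\}$ then $\varphi_{M_\kappa^1}(R')\ne\varphi_{M_\kappa^1}(R)$ and $\varphi_{M_\kappa^2}(R')\ne\varphi_{M_\kappa^2}(R)$; separation monotonic: responsive and direct; separation upper invariant: $\varphi_{M_k}(R)=\varphi_{M_k}(R')$ for $k<\kappa$; separation lower invariant: $\varphi_{M_k}(R)=\varphi_{M_k}(R')$ for $k>\kappa$. *)

(* Defs.v *)
From HB Require Import structures.
From mathcomp Require Import all_boot all_order all_algebra.
Set Implicit Arguments. Unset Strict Implicit. Unset Printing Implicit Defensive.
Import Order.TTheory GRing.Theory Num.Theory.
Local Open Scope ring_scope.

Section Defs.
Variable M : finType.
Variable R : realFieldType.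

(* a weak preference order: complete and transitive relation; [p a b] means a R b *)
Definition weak_order (p : rel M) : Prop := total p /\ transitive p.

Definition is_lottery (x : {ffun M -> R}) : Prop :=
  (forall a, 0 <= x a) /\ \sum_(a : M) x a = 1.

Definition mass (x : {ffun M -> R}) (A : {set M}) : R := \sum_(a in A) x a.

Definition icl (p : rel M) (a : M) : {set M} := [set b | p a b && p b a].

(* (p, q) is a separation splitting the indifference class C of p into C1 (above) and C2 *)
Definition separation (p q : rel M) (C C1 C2 : {set M}) : Prop :=
  weak_order p /\
  (exists c, C = icl p c) /\
  C1 :|: C2 = C /\ C1 :&: C2 = set0 /\ C1 != set0 /\ C2 != set0 /\
  (forall a b, q a b = if (a \in C) && (b \in C) then (a \in C1) || (b \in C2)
                          else p a b).

Definition strict (p : rel M) (a b : M) : bool := p a b && ~~ p b a.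

Definition sep_responsive (phi : rel M -> {ffun M -> R}) : Prop :=
  forall p q C C1 C2, separation p q C C1 C2 ->
    mass (phi q) C1 >= mass (phi p) C1 /\ mass (phi q) C2 <= mass (phi p) C2.

Definition sep_direct (phi : rel M -> {ffun M -> R}) : Prop :=
  forall p q C C1 C2, separation p q C C1 C2 ->
    (exists a, mass (phi p) (icl p a) != mass (phi q) (icl p a)) ->
    mass (phi q) C1 != mass (phi p) C1 /\ mass (phi q) C2 != mass (phi p) C2.

Definition sep_monotonic phi := sep_responsive phi /\ sep_direct phi.

(* classes M_k with k < kappa: classes strictly above C *)
Definition sep_upper_invariant (phi : rel M -> {ffun M -> R}) : Prop :=
  forall p q C C1 C2, separation p q C C1 C2 ->
    forall a c, c \in C -> strict p a c ->
      mass (phi p) (icl p a) = mass (phi q) (icl p a).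

(* classes M_k with k > kappa: classes strictly below C *)
Definition sep_lower_invariant (phi : rel M -> {ffun M -> R}) : Prop :=
  forall p q C C1 C2, separation p q C C1 C2 ->
    forall a c, c \in C -> strict p c a ->
      mass (phi p) (icl p a) = mass (phi q) (icl p a).

Definition fosd (p : rel M) (x y : {ffun M -> R}) : Prop :=
  forall a, \sum_(j | p j a) x j >= \sum_(j | p j a) y j.

Definition sep_strategyproof (phi : rel M -> {ffun M -> R}) : Prop :=
  forall p q C C1 C2, separation p q C C1 C2 ->
    fosd p (phi p) (phi q) /\ fosd q (phi q) (phi p).

End Defs.

(* Main.v *)
Require Import Defs.
From mathcomp Require Import all_boot all_order all_algebra.
Set Implicit Arguments. Unset Strict Implicit. Unset Printing Implicit Defensive.
Import Order.TTheory GRing.Theory Num.Theory.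

Section H.
Variable M : finType.
Variable R : realFieldType.
Local Open Scope ring_scope.

Lemma icl_refl (p : rel M) a : weak_order p -> a \in icl p a.
Proof. by case=> tot _; rewrite inE andbb; have := tot a a; rewrite orbb. Qed.

Lemma icl_eq (p : rel M) a b : weak_order p -> b \in icl p a -> icl p b = icl p a.
Proof.
case=> _ tr; rewrite inE => /andP[ab ba]; apply/setP => t; rewrite !inE.
apply/andP/andP => [[bt tb]|[a_t ta]]; split.
- exact: tr ab bt.
- exact: tr tb ba.
- exact: tr ba a_t.
- exact: tr ta ab.
Qed.

Lemma mass_closed (p : rel M) (x y : {ffun M -> R}) (S : {set M}) :
  weak_order p ->
  (forall s, s \in S -> icl p s \subset S /\ mass x (icl p s) = mass y (icl p s)) ->
  mass x S = mass y S.
Proof.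
move=> wo; have [n] := ubnP #|S|; elim: n S => // n IH S; rewrite ltnS => hS H.
case: (set_0Vmem S) => [->|[s sS]]; first by rewrite /mass !big_set0.
have [sub eqs] := H s sS.
rewrite /mass (big_setID (icl p s)) [in RHS](big_setID (icl p s)) /=.
rewrite (setIidPr sub); congr (_ + _); first exact: eqs.
apply: IH.
  apply: leq_trans hS; apply: proper_card; apply/properP; split; first exact: subsetDl.
  by exists s => //; rewrite inE icl_refl.
move=> t; rewrite inE => /andP[tns tS]; have [subt eqt] := H t tS; split => //.
apply/subsetP => u ut; rewrite inE (subsetP subt) // andbT.
apply: contra tns => us.
by rewrite -(icl_eq wo us) (icl_eq wo ut) icl_refl.
Qed.

Lemma mass_compl (x : {ffun M -> R}) (S : {set M}) :
  mass x S = \sum_a x a - mass x (~: S).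
Proof.
rewrite (bigID (fun a => a \in S)) /= /mass; apply/eqP; rewrite eq_sym subr_eq.
apply/eqP; congr (_ + _); apply: eq_bigl => a; by rewrite ?inE.
Qed.

End H.
Local Open Scope ring_scope.

Theorem lemma4 (M : finType) (R : realFieldType) (phi : rel M -> {ffun M -> R}) :
  (forall p : rel M, weak_order p -> is_lottery (phi p)) ->
  sep_monotonic phi -> sep_upper_invariant phi -> sep_lower_invariant phi ->
  sep_strategyproof phi.
Proof.
move=> Hlot [Hresp _] Hup Hlow p q C C1 C2 Hsep.
have Hsep' := Hsep.
case: Hsep' => wp [[c eC] [HU [HI [n1 [n2 Hq]]]]].
have [tot tr] := wp.
have inC x : (x \in C) = p c x && p x c by rewrite eC inE.
have disj x : x \in C1 -> x \in C2 -> False.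
  by move=> h1 h2; have := in_set0 x; rewrite -HI inE h1 h2.
have C1C x : x \in C1 -> x \in C by move=> h; rewrite -HU inE h.
have C2C x : x \in C2 -> x \in C by move=> h; rewrite -HU inE h orbT.
have pref x : p x x by have := tot x x; rewrite orbb.
have qp x y : q x y -> p x y.
  rewrite Hq; case: ifP => // /andP[]; rewrite !inC => /andP[_ xc] /andP[cy _] _.
  exact: tr xc cy.
have wq : weak_order q.
  split.
    move=> a b; rewrite !Hq [(b \in C) && _]andbC; case: ifP => [/andP[aC _]|_].
      move: aC; rewrite -HU inE => /orP[] ->; by rewrite ?orbT.
    exact: tot.
  move=> b a d qab qbd.
  case aC: (a \in C); case dC: (d \in C); last first.
  - rewrite Hq aC /=; exact: tr (qp _ _ qab) (qp _ _ qbd).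
  - rewrite Hq aC dC /=; exact: tr (qp _ _ qab) (qp _ _ qbd).
  - rewrite Hq aC dC /=; exact: tr (qp _ _ qab) (qp _ _ qbd).
  case bC: (b \in C).
    move: qab qbd; rewrite !Hq aC bC dC /=.
    case: (boolP (a \in C1)) => //= _ b2; case/orP => // b1; by case: (disj b).
  exfalso; move/negP: bC; apply; rewrite inC.
  move: aC dC; rewrite !inC => /andP[ca _] /andP[_ dc].
  by rewrite (tr _ _ _ ca (qp _ _ qab)) (tr _ _ _ (qp _ _ qbd) dc).
have [_ sp] := Hlot p wp.
have [_ sq] := Hlot q wq.
have cC : c \in C by rewrite eC icl_refl.
have above (S : {set M}) : (forall s, s \in S -> strict p s c) ->
    (forall s t, s \in S -> p t s -> t \in S) -> mass (phi p) S = mass (phi q) S.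
  move=> Hs Hc; apply: (mass_closed wp) => s sS; split.
    apply/subsetP => t; rewrite inE => /andP[_ ts]; exact: Hc ts.
  exact: (Hup _ _ _ _ _ Hsep s c cC (Hs s sS)).
have below (S : {set M}) : (forall s, s \in S -> strict p c s) ->
    (forall s t, s \in S -> p s t -> t \in S) -> mass (phi p) S = mass (phi q) S.
  move=> Hs Hc; apply: (mass_closed wp) => s sS; split.
    apply/subsetP => t; rewrite inE => /andP[st _]; exact: Hc st.
  exact: (Hlow _ _ _ _ _ Hsep s c cC (Hs s sS)).
have sumE (x : {ffun M -> R}) (P : pred M) : \sum_(j | P j) x j = mass x [set j | P j].
  by apply: eq_bigl => j; rewrite inE.
have eqp a : \sum_(j | p j a) phi p j = \sum_(j | p j a) phi q j.
  rewrite !sumE; case: (boolP (strict p a c)) => [/andP[ac nca]|].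
    apply: above => [s|s t]; rewrite !inE => sa.
      rewrite /strict (tr _ _ _ sa ac) /=; apply: contra nca => cs; exact: tr cs sa.
    move=> ts; exact: tr ts sa.
  rewrite /strict negb_and negbK => hca.
  have ca : p c a by case/orP: hca => // nac; have := tot a c; rewrite (negbTE nac).
  rewrite (mass_compl (phi p)) (mass_compl (phi q)) sp sq; congr (_ - _); apply: below => [s|s t]; rewrite !inE => nsa.
    have as_ : p a s by have := tot a s; rewrite (negbTE nsa) orbF.
    rewrite /strict (tr _ _ _ ca as_) /=; apply: contra nsa => sc; exact: tr sc ca.
  move=> st; apply: contra nsa => ta; exact: tr st ta.
split.
  by move=> a; rewrite eqp.
move=> a.
have qpE : (forall j, q j a = p j a) -> \sum_(j | q j a) phi q j >= \sum_(j | q j a) phi p j.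
  by move=> h; rewrite !(eq_bigl _ _ h) eqp.
case aC: (a \in C); last by apply: qpE => j; rewrite Hq aC andbF.
case: (boolP (a \in C1)) => a1; last first.
  apply: qpE => j; rewrite Hq aC andbT; case: ifP => // jC.
  have a2 : a \in C2 by move: aC; rewrite -HU inE (negbTE a1).
  rewrite a2 orbT; move: jC aC; rewrite !inC => /andP[_ jc] /andP[ca _]; by rewrite (tr _ _ _ jc ca).
pose U := [set j | strict p j c].
have setE : [set j | q j a] = U :|: C1.
  apply/setP => j; rewrite !inE Hq aC andbT.
  case jC: (j \in C).
    have a2 : a \in C2 = false by apply/negP => /(disj a a1).
    by rewrite a2 orbF; move: jC; rewrite inC /strict => /andP[-> ->].
  have : j \in C1 = false by apply/negP => /C1C; rewrite jC.
  move=> ->; rewrite orbF; move: jC aC; rewrite !inC /strict => jC /andP[ca ac].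
  apply/idP/idP => [ja|/andP[jc _]]; last exact: tr jc ca.
  have jc := tr _ _ _ ja ac; rewrite jc /=; apply/negP => cj; move/negP: jC; apply.
  by rewrite cj jc.
have disjU : [disjoint U & C1].
  rewrite -setI_eq0; apply/eqP/setP => j; rewrite !inE /strict.
  apply/negP => /andP[/andP[_ ncj] /C1C]; rewrite inC => /andP[cj _].
  by rewrite cj in ncj.
have sE (x : {ffun M -> R}) : \sum_(j | q j a) x j = mass x U + mass x C1.
  rewrite sumE setE /mass -bigU //; apply: eq_bigl => j; by rewrite !inE.
rewrite !sE; apply: lerD.
  rewrite above // => [s|s t]; rewrite !inE // /strict => /andP[sc ncs] ts.
  rewrite (tr _ _ _ ts sc) /=; apply: contra ncs => ct; exact: tr ct ts.
by have [] := Hresp _ _ _ _ _ Hsep.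
Qed.
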